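(* Let $G$ be a set, $\kappa$ a regular cardinal, $L$ a normal modal logic with the finite model property, and $T\subseteq\mathrm{Fm}_\kappa(G)$ with $|T|<\kappa$. Then for every sequent $\Gamma\Rightarrow\Delta$ with $\Gamma,\Delta\subseteq \mathrm{Fm}_\kappa(G)$, $$(G,\kappa,L,T)\vdash\Gamma\Rightarrow\Delta\iff (G,\kappa,L,\emptyset)\vdash \Box^*T,\Gamma\Rightarrow\Delta,$$ where $\Box^*T=\{\Box^n\varphi\mid n\ge 0,\ \varphi\in T\}$.
   Context: Formulas: for a set $G$ and regular cardinal $\kappa$, $\mathrm{Fm}_\kappa(G)$ is the least set containing $G$ and closed under $\varphi\mapsto\neg\varphi$, $\varphi\mapsto\Box\varphi$, and $S\mapsto\bigwedge S$, $S\mapsto\bigvee S$ for sets $S$ of formulas with $|S|<\kappa$. A sequent is $\Gamma\Rightarrow\Delta$ with $\Gamma,\Delta$ sets of formulas; commas denote union. For a set $S$, $\neg S=\{\neg\varphi:\varphi\in S\}$, $\Box S=\{\Box\varphi:\varphi\in S\}$. The calculus $(G,\kappa,L,T)$ has rules: (Ax) $\varphi\Rightarrow\varphi$; (W) from $\Gamma\Rightarrow\Delta$ infer $\Gamma,\Gamma'\Rightarrow\Delta,\Delta'$; (Cut) from $\Gamma\Rightarrow\Delta,\varphi$ for every $\varphi\in S$ and $S,\Gamma'\Rightarrow\Delta'$ infer $\Gamma,\Gamma'\Rightarrow\Delta,\Delta'$; (L$\neg$) from $\Gamma\Rightarrow\Delta,S$ infer $\neg S,\Gamma\Rightarrow\Delta$;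 (R$\neg$) from $S,\Gamma\Rightarrow\Delta$ infer $\Gamma\Rightarrow\Delta,\neg S$; for a family $\mathscr S$ of sets of formulas each of size $<\kappa$: (L$\bigwedge$) from $\bigcup\mathscr S,\Gamma\Rightarrow\Delta$ infer $\{\bigwedge S: S\in\mathscr S\},\Gamma\Rightarrow\Delta$; (R$\bigwedge$) from $\Gamma\Rightarrow\Delta,\{c(S):S\in\mathscr S\}$ for every choice function $c$ on $\mathscr S$ infer $\Gamma\Rightarrow\Delta,\{\bigwedge S:S\in\mathscr S\}$; (L$\bigvee$) from $\{c(S):S\in\mathscr S\},\Gamma\Rightarrow\Delta$ for every choice function $c$ infer $\{\bigvee S:S\in\mathscr S\},\Gamma\Rightarrow\Delta$; (R$\bigvee$) from $\Gamma\Rightarrow\Delta,\bigcup\mathscr S$ infer $\Gamma\Rightarrow\Delta,\{\bigvee S:S\in\mathscr S\}$; (Nec) from $S\Rightarrow\varphi$ infer $\Box S\Rightarrow\Box\varphi$; (lf) for sets $S_n$ ($n\in\omega$) of size $<\kappa$: from $\{\Box^n\bigvee(I\cap S_n):n\in\omega\},\Gamma\Rightarrow\Delta$ for every finite $I\subseteq\bigcup_nS_n$ infer $\{\Box^n\bigvee S_n:n\in\omega\},\Gamma\Rightarrow\Delta$; (T,L) from $S,\Gamma\Rightarrow\Delta$ infer $\Gamma\Rightarrow\Delta$ for any $S\subseteq T\cup L_{(G,\kappa)}$, where $L_{(G,\kappa)}$ is the set of formulas obtained from theorems of $L$ by substituting formulas of $\mathrm{Fm}_\kappa(G)$ for propositional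 variables. Proofs are well-founded (possibly infinitely branching) trees of sequents built by these rules; $(G,\kappa,L,T)\vdash\Gamma\Rightarrow\Delta$ means there is a proof with end-sequent $\Gamma\Rightarrow\Delta$. *)

(* Defs.v *)
From Stdlib Require Import List.

Set Implicit Arguments.

Inductive form (V : Type) : Type :=
| Atom : V -> form V
| Neg  : form V -> form V
| Box  : form V -> form V
| BigAnd : forall I : Type, (I -> form V) -> form V
| BigOr  : forall I : Type, (I -> form V) -> form V.

Arguments Atom {V} _.
Arguments Neg {V} _.
Arguments Box {V} _.
Arguments BigAnd {V} _ _.
Arguments BigOr {V} _ _.

Definition boxn {V : Type} (n : nat) (phi : form V) : form V := Nat.iter n (@Box V) phi.

(* Cardinals.  A cardinal is given as (the cardinality of) a type K.   *)
Definition injective {A B : Type} (f : A -> B) : Prop := forall x y, f x = f y -> x = y.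

Definition card_lt (A K : Type) : Prop :=
  (exists f : A -> K, injective f) /\ ~ (exists g : K -> A, injective g).

Definition regular_cardinal (K : Type) : Prop :=
  (exists f : nat -> K, injective f) /\
  (forall (I : Type) (S : I -> Type),
      card_lt I K -> (forall i, card_lt (S i) K) -> card_lt {i : I & S i} K).

Inductive Fm (K : Type) {V : Type} : form V -> Prop :=
| Fm_atom : forall v, Fm K (Atom v)
| Fm_neg  : forall phi, Fm K phi -> Fm K (Neg phi)
| Fm_box  : forall phi, Fm K phi -> Fm K (Box phi)
| Fm_and  : forall (I : Type) (f : I -> form V),
    card_lt I K -> (forall i, Fm K (f i)) -> Fm K (BigAnd I f)
| Fm_or   : forall (I : Type) (f : I -> form V),
    card_lt I K -> (forall i, Fm K (f i)) -> Fm K (BigOr I f).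

Definition fset (V : Type) := form V -> Prop.
Definition Fmset (K : Type) {V : Type} (X : fset V) : Prop := forall phi, X phi -> Fm K phi.
Definition union {V : Type} (X Y : fset V) : fset V := fun phi => X phi \/ Y phi.
Definition single {V : Type} (phi : form V) : fset V := fun psi => psi = phi.
Definition emptyset {V : Type} : fset V := fun _ => False.
Definition negset {V : Type} (X : fset V) : fset V := fun psi => exists phi, X phi /\ psi = Neg phi.
Definition boxset {V : Type} (X : fset V) : fset V := fun psi => exists phi, X phi /\ psi = Box phi.
Definition imageset {V : Type} (c : form V -> form V) (X : fset V) : fset V :=
  fun psi => exists phi, X phi /\ psi = c phi.
Definition finite_set {V : Type} (X : fset V) : Prop :=
  exists l : list (form V), forall phi, X phi <-> In phi l.

Definition boxstar {V : Type} (T : fset V) : fset V :=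
  fun psi => exists n phi, T phi /\ psi = boxn n phi.

Definition is_conj {V : Type} (phi : form V) : Prop := exists I f, phi = @BigAnd V I f.
Definition is_disj {V : Type} (phi : form V) : Prop := exists I f, phi = @BigOr V I f.
Definition conjunct_of {V : Type} (psi phi : form V) : Prop :=
  exists I (f : I -> form V) i, phi = BigAnd I f /\ psi = f i.
Definition disjunct_of {V : Type} (psi phi : form V) : Prop :=
  exists I (f : I -> form V) i, phi = BigOr I f /\ psi = f i.

(* Modal logics.  The language of L: finitary formulas Fm_omega(nat)   *)
(* over countably many propositional variables.                        *)
Definition finitary (phi : form nat) : Prop := Fm nat phi.

Definition impl {V : Type} (phi psi : form V) : form V :=
  BigOr bool (fun b => if b then Neg phi else psi).

Fixpoint peval {V : Type} (v : form V -> bool) (phi : form V) : Prop :=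
  match phi with
  | Atom _ => v phi = true
  | Box _ => v phi = true
  | Neg psi => ~ peval v psi
  | BigAnd J f => forall i, peval v (f i)
  | BigOr J f => exists i, peval v (f i)
  end.

Definition tautology {V : Type} (phi : form V) : Prop := forall v, peval v phi.

Fixpoint subst {V W : Type} (s : V -> form W) (phi : form V) : form W :=
  match phi with
  | Atom p => s p
  | Neg psi => Neg (subst s psi)
  | Box psi => Box (subst s psi)
  | BigAnd J f => BigAnd J (fun i => subst s (f i))
  | BigOr J f => BigOr J (fun i => subst s (f i))
  end.

Definition axK : form nat :=
  impl (Box (impl (Atom 0) (Atom 1))) (impl (Box (Atom 0)) (Box (Atom 1))).

Definition normal_logic (L : fset nat) : Prop :=
  (forall phi, L phi -> finitary phi) /\
  (forall phi, finitary phi -> tautology phi -> L phi) /\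
  L axK /\
  (forall phi psi, L phi -> L (impl phi psi) -> L psi) /\
  (forall phi, L phi -> L (Box phi)) /\
  (forall (s : nat -> form nat) phi, (forall n, finitary (s n)) -> L phi -> L (subst s phi)).

Fixpoint sat {W V : Type} (R : W -> W -> Prop) (val : V -> W -> Prop) (w : W) (phi : form V)
  : Prop :=
  match phi with
  | Atom p => val p w
  | Neg psi => ~ sat R val w psi
  | Box psi => forall u, R w u -> sat R val u psi
  | BigAnd J f => forall i, sat R val w (f i)
  | BigOr J f => exists i, sat R val w (f i)
  end.

Definition finite_type (W : Type) : Prop := exists l : list W, forall w, In w l.

Definition fmp (L : fset nat) : Prop :=
  forall phi, finitary phi -> ~ L phi ->
    exists (W : Type) (R : W -> W -> Prop) (val : nat -> W -> Prop),
      finite_type W /\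
      (forall psi w, L psi -> sat R val w psi) /\
      (exists w, ~ sat R val w phi).

Definition L_inst (G K : Type) (L : fset nat) : fset G :=
  fun psi => exists (s : nat -> form G) phi,
    (forall n, Fm K (s n)) /\ L phi /\ psi = subst s phi.

Inductive prov (G K : Type) (L : fset nat) (T : fset G) : fset G -> fset G -> Prop :=
| r_Ax : forall phi, Fm K phi -> prov K L T (single phi) (single phi)
| r_W : forall Ga De Ga' De',
    Fmset K Ga' -> Fmset K De' ->
    prov K L T Ga De -> prov K L T (union Ga Ga') (union De De')
| r_Cut : forall (S Ga De Ga' De' : fset G),
    Fmset K S -> Fmset K Ga -> Fmset K De ->
    (forall phi, S phi -> prov K L T Ga (union De (single phi))) ->
    prov K L T (union S Ga') De' ->
    prov K L T (union Ga Ga') (union De De')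
| r_LNeg : forall S Ga De,
    prov K L T Ga (union De S) -> prov K L T (union (negset S) Ga) De
| r_RNeg : forall S Ga De,
    prov K L T (union S Ga) De -> prov K L T Ga (union De (negset S))
| r_LAnd : forall (A Ga De : fset G),
    Fmset K A -> (forall phi, A phi -> is_conj phi) ->
    prov K L T (union (fun psi => exists phi, A phi /\ conjunct_of psi phi) Ga) De ->
    prov K L T (union A Ga) De
| r_RAnd : forall (A Ga De : fset G),
    Fmset K A -> Fmset K Ga -> Fmset K De -> (forall phi, A phi -> is_conj phi) ->
    (forall c : form G -> form G, (forall phi, A phi -> conjunct_of (c phi) phi) ->
        prov K L T Ga (union De (imageset c A))) ->
    prov K L T Ga (union De A)
| r_LOr : forall (A Ga De : fset G),
    Fmset K A -> Fmset K Ga -> Fmset K De -> (forall phi, A phi -> is_disj phi) ->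
    (forall c : form G -> form G, (forall phi, A phi -> disjunct_of (c phi) phi) ->
        prov K L T (union (imageset c A) Ga) De) ->
    prov K L T (union A Ga) De
| r_ROr : forall (A Ga De : fset G),
    Fmset K A -> (forall phi, A phi -> is_disj phi) ->
    prov K L T Ga (union De (fun psi => exists phi, A phi /\ disjunct_of psi phi)) ->
    prov K L T Ga (union De A)
| r_Nec : forall (S : fset G) phi,
    prov K L T S (single phi) -> prov K L T (boxset S) (single (Box phi))
| r_lf : forall (J : nat -> Type) (f : forall n, J n -> form G) (Ga De : fset G),
    (forall n, card_lt (J n) K) -> (forall n j, Fm K (f n j)) ->
    Fmset K Ga -> Fmset K De ->
    (forall I : fset G, finite_set I -> (forall psi, I psi -> exists n j, psi = f n j) ->
        prov K L T
          (union (fun psi => exists n,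
                    psi = boxn n (BigOr {j : J n | I (f n j)} (fun j => f n (proj1_sig j))))
                 Ga) De) ->
    prov K L T (union (fun psi => exists n, psi = boxn n (BigOr (J n) (f n))) Ga) De
| r_TL : forall (S Ga De : fset G),
    (forall phi, S phi -> T phi \/ @L_inst G K L phi) ->
    prov K L T (union S Ga) De -> prov K L T Ga De.

(* Main.v *)
Require Import Defs.
From Stdlib Require Import Classical FunctionalExtensionality PropExtensionality.

Lemma set_ext {V : Type} (X Y : fset V) : (forall x, X x <-> Y x) -> X = Y.
Proof. intro H; extensionality x; apply propositional_extensionality; auto. Qed.

Lemma prov_ext G K L (T : fset G) A B A' B' :
  prov K L T A B -> (forall x, A x <-> A' x) -> (forall x, B x <-> B' x) -> prov K L T A' B'.
Proof. intros H H1 H2; rewrite <- (set_ext _ _ H1), <- (set_ext _ _ H2); exact H. Qed.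

Lemma Fmset_union K V (X Y : fset V) : Fmset K X -> Fmset K Y -> Fmset K (union X Y).
Proof. intros a b phi [h|h]; auto. Qed.

Lemma Fm_boxn K V n (phi : form V) : Fm K phi -> Fm K (boxn n phi).
Proof. intro h; induction n; simpl; [exact h | constructor; exact IHn]. Qed.

Lemma Fmset_boxstar K V (T : fset V) : Fmset K T -> Fmset K (boxstar T).
Proof. intros h psi [n [phi [h1 ->]]]; apply Fm_boxn; auto. Qed.

Lemma Fmset_empty K V : Fmset K (@emptyset V).
Proof. intros phi []. Qed.

Ltac un := unfold union, single, emptyset in *.

Lemma forward G K L (T : fset G) : Fmset K T ->
  forall Ga De, prov K L T Ga De -> prov K L emptyset (union (boxstar T) Ga) De.
Proof.
  intros hT Ga De H.
  assert (hB : Fmset K (boxstar T)) by (apply Fmset_boxstar; auto).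
  induction H.
  - eapply prov_ext. eapply (r_W (Ga := single phi) (De := single phi) (Ga' := boxstar T) (De' := emptyset)); auto using Fmset_empty.
    apply r_Ax; auto.
    intro x; un; tauto. intro x; un; tauto.
  - eapply prov_ext. eapply (r_W (Ga' := Ga') (De' := De')); eauto.
    intro x; un; tauto. intro x; un; tauto.
  - eapply prov_ext.
    + eapply (r_Cut (S:=S) (Ga := union (boxstar T) Ga) (De := De) (Ga' := union (boxstar T) Ga') (De' := De')).
      * exact H.
      * apply Fmset_union; auto.
      * exact H1.
      * exact H3.
      * eapply prov_ext; [exact IHprov|..]; intro x; un; tauto.
    + intro x; un; tauto.
    + intro x; un; tauto.
  - eapply prov_ext. apply r_LNeg; exact IHprov. intro x; un; tauto. intro x; un; tauto.
  - apply r_RNeg. eapply prov_ext; [exact IHprov|..]; intro x; un; tauto.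
  - eapply prov_ext. eapply (r_LAnd (A:=A) (Ga:=union (boxstar T) Ga) (De:=De)); [exact H | exact H0 |].
    eapply prov_ext; [exact IHprov|..]; intro x; un; tauto.
    intro x; un; tauto. intro x; un; tauto.
  - apply r_RAnd; auto using Fmset_union.
  - eapply prov_ext. eapply (r_LOr (A:=A) (Ga:=union (boxstar T) Ga) (De:=De)); [exact H | apply Fmset_union; auto | exact H1 | exact H2 |].
    intros c hc. eapply prov_ext; [exact (H4 c hc)|..]; intro x; un; tauto.
    intro x; un; tauto. intro x; un; tauto.
  - apply r_ROr; auto.
  - apply r_Nec in IHprov.
    eapply prov_ext. eapply (r_W (Ga' := boxstar T) (De' := emptyset)); eauto using Fmset_empty.
    intro x; un; split.
    + intros [[y [[[n [p [hp ->]]]|hy] ->]]|hx].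
      * left. exists (Datatypes.S n), p. split; auto.
      * right. exists y; auto.
      * left; auto.
    + intros [hx|[y [hy ->]]]; [right; auto | left; exists y; auto].
    + intro x; un; tauto.
  - eapply prov_ext. eapply (@r_lf _ K L emptyset J f (union (boxstar T) Ga) De); [exact H | exact H0 | apply Fmset_union; auto | exact H2 |].
    intros I hI hI'. eapply prov_ext; [exact (H4 I hI hI')|..]; intro x; un; tauto.
    intro x; un; tauto. intro x; un; tauto.
  - apply (r_TL (S := fun phi => S phi /\ ~ T phi)).
    + intros phi [h1 h2]. destruct (H phi h1) as [h|h]; [contradiction|auto].
    + eapply prov_ext; [exact IHprov|..|intro x; tauto].
      intro x; un; split.
      * intros [h|[h|h]]; auto. destruct (classic (T x)).
        -- right; left; exists 0, x; auto.
        -- left; auto.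
      * intros [[h _]|[h|h]]; auto.
Qed.

Lemma mono G K L (T : fset G) Ga De : prov K L emptyset Ga De -> prov K L T Ga De.
Proof.
  intro H; induction H.
  - apply r_Ax; auto.
  - apply r_W; auto.
  - apply (r_Cut (S:=S)); auto.
  - apply r_LNeg; auto.
  - apply r_RNeg; auto.
  - apply r_LAnd; auto.
  - apply r_RAnd; auto.
  - apply r_LOr; auto.
  - apply r_ROr; auto.
  - apply r_Nec; auto.
  - apply r_lf; auto.
  - apply (r_TL (S:=S)); auto. intros phi h; destruct (H phi h) as [[]|h']; auto.
Qed.

Lemma boxes G K L (T : fset G) : Fmset K T -> forall n phi, T phi ->
  prov K L T emptyset (single (boxn n phi)).
Proof.
  intros hT n phi hp; induction n.
  - apply (r_TL (S := single phi)). intros x ->; auto.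
    eapply prov_ext. eapply (@r_Ax G K L T phi (hT phi hp)). intro x; un; tauto. intro x; tauto.
  - eapply prov_ext. apply r_Nec; exact IHn.
    intro x; unfold boxset, emptyset; split; [intros [y [[] _]] | intros []].
    intro x; tauto.
Qed.

Theorem theorem3p1 :
  forall (G K : Type) (L : fset nat) (T : fset G),
    regular_cardinal K ->
    normal_logic L -> fmp L ->
    Fmset K T -> card_lt {phi : form G | T phi} K ->
    forall Ga De : fset G, Fmset K Ga -> Fmset K De ->
      (prov K L T Ga De <-> prov K L emptyset (union (boxstar T) Ga) De).
Proof.
  intros G K L T _ _ _ hT _ Ga De hG hD; split.
  - apply forward; auto.
  - intro H. eapply prov_ext.
    eapply (r_Cut (S := boxstar T) (Ga := emptyset) (De := emptyset) (Ga' := Ga) (De' := De));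
      auto using Fmset_boxstar, Fmset_empty.
    + intros phi [n [p [hp ->]]]. eapply prov_ext. apply (@boxes G K L T hT n p hp).
      intro x; tauto. intro x; un; tauto.
    + apply mono; exact H.
    + intro x; un; tauto.
    + intro x; un; tauto.
Qed.
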